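(* Let $A$ and $B$ be braided Hopf algebras with braidings $\langle\cdot\mid\cdot\rangle_A$ and $\langle\cdot\mid\cdot\rangle_B$, and let $\chi:A\to B$ be a surjective Hopf algebra map which is braided, i.e. $\langle a\mid a'\rangle_A=\langle\chi(a)\mid\chi(a')\rangle_B$ for all $a,a'\in A$. Then the map $\chi^*:U(B)\to U(A)$, $u\mapsto u\circ\chi$, is an isomorphism of Hopf algebras.
   Context: A braiding on a bialgebra $A$ is a bilinear form $\langle\cdot\mid\cdot\rangle$ on $A$ satisfying, for all $a,b,c$ (Sweedler notation): $\sum\langle a_{(1)}\mid b_{(1)}\rangle b_{(2)}a_{(2)}=\sum\langle a_{(2)}\mid b_{(2)}\rangle a_{(1)}b_{(1)}$; convolution-invertibility in $(A\otimes A)^*$; $\langle a\mid bc\rangle=\sum\langle a_{(1)}\mid b\rangle\langle a_{(2)}\mid c\rangle$; $\langle ab\mid c\rangle=\sum\langle b\mid c_{(1)}\rangle\langle a\mid c_{(2)}\rangle$. For a braided Hopf algebra $A$ with antipode $S$ and restricted dual $A^\circ$, define $l^+(a)(b)=\langle a\mid b\rangle$, $l^-(a)(b)=\langle b\mid S(a)\rangle$; $U(A)$ is the Hopf subalgebra of $A^\circ$ generated by $l^+(A)\cup l^-(A)$. *)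

(* Defs.v *)
(* Hopf algebras over a field K, Sweedler notation encoded
   by finite lists of pairs; tensor identities are tested against all
   multilinear K-valued forms (which separate points of tensor products
   of vector spaces over a field). *)
From HB Require Import structures.
From mathcomp Require Import all_boot all_order all_algebra.
Set Implicit Arguments. Unset Strict Implicit. Unset Printing Implicit Defensive.
Import GRing.Theory.
Local Open Scope ring_scope.

Section HopfDefs.
Variable K : fieldType.

Definition lin (U V : lmodType K) (f : U -> V) :=
  forall (k : K) (x y : U), f (k *: x + y) = k *: f x + f y.

Variable A : algType K.

Definition klin (f : A -> K) := forall (k : K) (x y : A), f (k *: x + y) = k * f x + f y.

Definition bilin (phi : A -> A -> K) :=
  (forall b, klin (fun a => phi a b)) /\ (forall a, klin (phi a)).

Definition trilin (t : A -> A -> A -> K) :=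
  (forall b c, klin (fun a => t a b c)) /\ (forall a c, klin (fun b => t a b c))
  /\ (forall a b, klin (t a b)).

Record HopfData := { cop : A -> seq (A * A); cou : A -> K; ant : A -> A }.

Definition is_hopf (H : HopfData) : Prop :=
  (forall phi, bilin phi -> klin (fun a => \sum_(p <- cop H a) phi p.1 p.2)) /\
  (forall t, trilin t -> forall a,
     \sum_(p <- cop H a) \sum_(q <- cop H p.1) t q.1 q.2 p.2
     = \sum_(p <- cop H a) \sum_(q <- cop H p.2) t p.1 q.1 q.2) /\
  klin (cou H) /\
  (forall a, \sum_(p <- cop H a) cou H p.1 *: p.2 = a) /\
  (forall a, \sum_(p <- cop H a) cou H p.2 *: p.1 = a) /\
  (forall phi, bilin phi -> forall a b,
     \sum_(p <- cop H (a * b)) phi p.1 p.2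
     = \sum_(p <- cop H a) \sum_(q <- cop H b) phi (p.1 * q.1) (p.2 * q.2)) /\
  (forall phi, bilin phi -> \sum_(p <- cop H 1) phi p.1 p.2 = phi 1 1) /\
  (forall a b, cou H (a * b) = cou H a * cou H b) /\
  cou H 1 = 1 /\
  lin (ant H) /\
  (forall a, \sum_(p <- cop H a) ant H p.1 * p.2 = cou H a *: 1) /\
  (forall a, \sum_(p <- cop H a) p.1 * ant H p.2 = cou H a *: 1).

Definition is_braiding (H : HopfData) (br : A -> A -> K) : Prop :=
  bilin br /\
  (forall a b, \sum_(p <- cop H a) \sum_(q <- cop H b) br p.1 q.1 *: (q.2 * p.2)
             = \sum_(p <- cop H a) \sum_(q <- cop H b) br p.2 q.2 *: (p.1 * q.1)) /\
  (exists br' : A -> A -> K, bilin br' /\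
     (forall a b, \sum_(p <- cop H a) \sum_(q <- cop H b) br p.1 q.1 * br' p.2 q.2
                  = cou H a * cou H b) /\
     (forall a b, \sum_(p <- cop H a) \sum_(q <- cop H b) br' p.1 q.1 * br p.2 q.2
                  = cou H a * cou H b)) /\
  (forall a b c, br a (b * c) = \sum_(p <- cop H a) br p.1 b * br p.2 c) /\
  (forall a b c, br (a * b) c = \sum_(p <- cop H c) br b p.1 * br a p.2).

Definition conv (H : HopfData) (f g : A -> K) : A -> K :=
  fun a => \sum_(p <- cop H a) f p.1 * g p.2.

(* "Delta f lies in X (x) X": f(ab) = sum_i g_i(a) h_i(b) with g_i, h_i in X *)
Definition cop_in (X : (A -> K) -> Prop) (f : A -> K) : Prop :=
  exists s : seq ((A -> K) * (A -> K)),
    (forall i, (i < size s)%N ->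
       X (nth (fun _ => 0, fun _ => 0) s i).1 /\ X (nth (fun _ => 0, fun _ => 0) s i).2) /\
    (forall a b, f (a * b) = \sum_(p <- s) p.1 a * p.2 b).

(* Hopf subalgebras of the restricted dual A^o.  Elements are linear
   functionals; the coproduct condition (Delta X <= X (x) X) forces
   them to lie in A^o. *)
Definition hopf_subalg (H : HopfData) (X : (A -> K) -> Prop) : Prop :=
  (forall f, X f -> klin f) /\
  X (cou H) /\
  (forall (k : K) f g, X f -> X g -> X (fun a => k * f a + g a)) /\
  (forall f g, X f -> X g -> X (conv H f g)) /\
  (forall f, X f -> X (fun a => f (ant H a))) /\
  (forall f, X f -> cop_in X f).

Definition lplus (br : A -> A -> K) (a : A) : A -> K := fun b => br a b.
Definition lminus (H : HopfData) (br : A -> A -> K) (a : A) : A -> K :=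
  fun b => br b (ant H a).

Definition Ualg (H : HopfData) (br : A -> A -> K) (f : A -> K) : Prop :=
  forall X, hopf_subalg H X -> (forall a, X (lplus br a)) ->
            (forall a, X (lminus H br a)) -> X f.

End HopfDefs.

Definition hopf_map (K : fieldType) (A B : algType K)
  (HA : HopfData A) (HB : HopfData B) (chi : A -> B) : Prop :=
  lin chi /\ chi 1 = 1 /\ (forall a b, chi (a * b) = chi a * chi b) /\
  (forall a, cou HB (chi a) = cou HA a) /\
  (forall phi, bilin phi -> forall a,
     \sum_(p <- cop HB (chi a)) phi p.1 p.2
     = \sum_(p <- cop HA a) phi (chi p.1) (chi p.2)).

(* Main.v *)
Require Import Defs.
From HB Require Import structures.
From mathcomp Require Import all_boot all_order all_algebra.
From Stdlib Require Import FunctionalExtensionality.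
Set Implicit Arguments. Unset Strict Implicit. Unset Printing Implicit Defensive.
Import GRing.Theory.
Local Open Scope ring_scope.

Section Lin.
Variable K : fieldType.

Section LA.
Variable A : algType K.
Implicit Types (f g : A -> K) (x y : A).

Lemma klin0 f : klin f -> f 0 = 0.
Proof.
move=> h; have := h 1 0 0; rewrite scaler0 addr0 mul1r.
by move/(congr1 (fun z => z - f 0)); rewrite addrK subrr.
Qed.

Lemma klinD f x y : klin f -> f (x + y) = f x + f y.
Proof. by move=> h; rewrite -[x]scale1r h mul1r scale1r. Qed.

Lemma klinZ f k x : klin f -> f (k *: x) = k * f x.
Proof. by move=> h; rewrite -[k *: x]addr0 h klin0 // addr0. Qed.

Lemma klin_sum f I (s : seq I) (F : I -> A) :
  klin f -> f (\sum_(i <- s) F i) = \sum_(i <- s) f (F i).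
Proof.
move=> h; elim: s => [|i s IH]; first by rewrite !big_nil klin0.
by rewrite !big_cons klinD // IH.
Qed.

Lemma klin_of f : (forall x y, f (x + y) = f x + f y) ->
  (forall k x, f (k *: x) = k * f x) -> klin f.
Proof. by move=> hD hZ k x y; rewrite hD hZ. Qed.

Lemma klin_sum_fun I (s : seq I) (F : I -> A -> K) :
  (forall i, klin (F i)) -> klin (fun x => \sum_(i <- s) F i x).
Proof.
move=> h; apply: klin_of => [x y|k x].
  by rewrite -big_split; apply: eq_bigr => i _; rewrite klinD.
by rewrite mulr_sumr; apply: eq_bigr => i _; rewrite klinZ.
Qed.

Lemma klin_mull (c : K) g : klin g -> klin (fun x => c * g x).
Proof. by move=> h k x y; rewrite h mulrDr mulrCA. Qed.

Lemma klin_mulr (c : K) g : klin g -> klin (fun x => g x * c).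
Proof. by move=> h k x y; rewrite h mulrDl mulrA. Qed.

Lemma klin_add f g : klin f -> klin g -> klin (fun x => f x + g x).
Proof.
move=> hf hg; apply: klin_of => [x y|k x]; first by rewrite !klinD // addrACA.
by rewrite !klinZ // mulrDr.
Qed.

Lemma klin_cst0 : klin (fun _ : A => 0 : K).
Proof. by move=> k x y; rewrite mulr0 addr0. Qed.

Lemma klin_ext f g : klin f -> (forall x, f x = g x) -> klin g.
Proof. by move=> h e k x y; rewrite -!e h. Qed.

End LA.

Section LM.
Variables U V : lmodType K.
Lemma lin0 (g : U -> V) : lin g -> g 0 = 0.
Proof.
move=> h; have := h 1 0 0; rewrite scaler0 addr0 scale1r.
by move/(congr1 (fun z => z - g 0)); rewrite addrK subrr.
Qed.
Lemma linD (g : U -> V) x y : lin g -> g (x + y) = g x + g y.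
Proof. by move=> h; rewrite -[x]scale1r h !scale1r. Qed.
Lemma linZ (g : U -> V) k x : lin g -> g (k *: x) = k *: g x.
Proof. by move=> h; rewrite -[k *: x]addr0 h lin0 // addr0. Qed.
Lemma lin_sum (g : U -> V) I (s : seq I) (F : I -> U) :
  lin g -> g (\sum_(i <- s) F i) = \sum_(i <- s) g (F i).
Proof.
move=> h; elim: s => [|i s IH]; first by rewrite !big_nil lin0.
by rewrite !big_cons linD // IH.
Qed.
End LM.

Lemma klin_comp (A B : algType K) (f : B -> K) (g : A -> B) :
  klin f -> lin g -> klin (fun x => f (g x)).
Proof. by move=> hf hg k x y; rewrite hg hf. Qed.

Lemma lin_mull (A : algType K) (c : A) : lin (fun x : A => c * x).
Proof. by move=> k x y; rewrite mulrDr scalerAr. Qed.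
Lemma lin_mulr (A : algType K) (c : A) : lin (fun x : A => x * c).
Proof. by move=> k x y; rewrite mulrDl scalerAl. Qed.

End Lin.
Lemma lin_comp (K : fieldType) (U V W : lmodType K) (g : V -> W) (h : U -> V) :
  lin g -> lin h -> lin (fun x => g (h x)).
Proof. by move=> hg hh k x y; rewrite hh hg. Qed.

Section Hopf.
Variables (K : fieldType) (A : algType K) (H : HopfData A).
Hypothesis hH : is_hopf H.

Definition sw (phi : A -> A -> K) a := \sum_(p <- cop H a) phi p.1 p.2.

Lemma sw_klin phi : bilin phi -> klin (sw phi).
Proof. by case: hH => h _; apply: h. Qed.

Lemma coassoc t : trilin t -> forall a,
  \sum_(p <- cop H a) \sum_(q <- cop H p.1) t q.1 q.2 p.2
  = \sum_(p <- cop H a) \sum_(q <- cop H p.2) t p.1 q.1 q.2.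
Proof. by case: hH => _ [h _]; apply: h. Qed.

Lemma cou_klin : klin (cou H).
Proof. by case: hH => _ [_ [h _]]. Qed.

Lemma counitl a : \sum_(p <- cop H a) cou H p.1 *: p.2 = a.
Proof. by case: hH => _ [_ [_ [h _]]]. Qed.

Lemma counitr a : \sum_(p <- cop H a) cou H p.2 *: p.1 = a.
Proof. by case: hH => _ [_ [_ [_ [h _]]]]. Qed.

Lemma copM phi : bilin phi -> forall a b,
  \sum_(p <- cop H (a * b)) phi p.1 p.2
  = \sum_(p <- cop H a) \sum_(q <- cop H b) phi (p.1 * q.1) (p.2 * q.2).
Proof. by case: hH => _ [_ [_ [_ [_ [h _]]]]]; apply: h. Qed.

Lemma cop1 phi : bilin phi -> \sum_(p <- cop H 1) phi p.1 p.2 = phi 1 1.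
Proof. by case: hH => _ [_ [_ [_ [_ [_ [h _]]]]]]; apply: h. Qed.

Lemma couM a b : cou H (a * b) = cou H a * cou H b.
Proof. by case: hH => _ [_ [_ [_ [_ [_ [_ [h _]]]]]]]. Qed.

Lemma cou1 : cou H 1 = 1.
Proof. by case: hH => _ [_ [_ [_ [_ [_ [_ [_ [h _]]]]]]]]. Qed.

Lemma ant_lin : lin (ant H).
Proof. by case: hH => _ [_ [_ [_ [_ [_ [_ [_ [_ [h _]]]]]]]]]. Qed.

Lemma antl a : \sum_(p <- cop H a) ant H p.1 * p.2 = cou H a *: 1.
Proof. by case: hH => _ [_ [_ [_ [_ [_ [_ [_ [_ [_ [h _]]]]]]]]]]. Qed.

Lemma antr a : \sum_(p <- cop H a) p.1 * ant H p.2 = cou H a *: 1.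
Proof. by case: hH => _ [_ [_ [_ [_ [_ [_ [_ [_ [_ [_ h]]]]]]]]]]. Qed.

Lemma sw_counitl (g : A -> K) a : klin g ->
  \sum_(p <- cop H a) cou H p.1 * g p.2 = g a.
Proof.
move=> hg; rewrite -[in RHS](counitl a) klin_sum //.
by apply: eq_bigr => p _; rewrite klinZ.
Qed.

Lemma sw_counitr (g : A -> K) a : klin g ->
  \sum_(p <- cop H a) cou H p.2 * g p.1 = g a.
Proof.
move=> hg; rewrite -[in RHS](counitr a) klin_sum //.
by apply: eq_bigr => p _; rewrite klinZ.
Qed.

End Hopf.
Section HopfMap.
Variables (K : fieldType) (A B : algType K) (HA : HopfData A) (HB : HopfData B).
Hypotheses (hA : is_hopf HA) (hB : is_hopf HB).
Variable chi : A -> B.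
Hypothesis hchi : hopf_map HA HB chi.

Lemma chi_lin : lin chi. Proof. by case: hchi. Qed.
Lemma chi1 : chi 1 = 1. Proof. by case: hchi => _ []. Qed.
Lemma chiM a b : chi (a * b) = chi a * chi b. Proof. by case: hchi => _ [_ []]. Qed.
Lemma chi_cou a : cou HB (chi a) = cou HA a. Proof. by case: hchi => _ [_ [_ []]]. Qed.
Lemma chi_cop phi : bilin phi -> forall a,
  \sum_(p <- cop HB (chi a)) phi p.1 p.2 = \sum_(p <- cop HA a) phi (chi p.1) (chi p.2).
Proof. by case: hchi => _ [_ [_ [_ h]]]; apply: h. Qed.

Lemma ant_chi (f : B -> K) a : klin f -> f (ant HB (chi a)) = f (chi (ant HA a)).
Proof.
move=> hf; have hS := ant_lin hB; have hSA := ant_lin hA; have hc := chi_lin.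
rewrite -(@sw_counitr _ _ _ hA (fun x => f (ant HB (chi x)))); last first.
  exact: (klin_comp (g := fun x => ant HB (chi x)) hf (lin_comp hS hc)).
transitivity (\sum_(p <- cop HA a) \sum_(q <- cop HA p.2)
   f (ant HB (chi p.1) * (chi q.1 * chi (ant HA q.2)))).
  apply: eq_bigr => p _.
  rewrite -klin_sum // -mulr_sumr.
  have -> : \sum_(q <- cop HA p.2) chi q.1 * chi (ant HA q.2)
            = chi (cou HA p.2 *: 1).
    by rewrite -antr // lin_sum //; apply: eq_bigr => q _; rewrite chiM.
  by rewrite linZ // chi1 -scalerAr mulr1 klinZ.
rewrite -(@coassoc _ _ _ hA (fun x y z => f (ant HB (chi x) * (chi y * chi (ant HA z))))) //; last first.
  split; [|split].
  - move=> y z; apply: (klin_comp (g := fun x => ant HB (chi x) * (chi y * chi (ant HA z)))) => //.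
    exact: (lin_comp (g := fun u => u * _) (lin_mulr _) (lin_comp hS hc)).
  - move=> x z; apply: (klin_comp (g := fun y => ant HB (chi x) * (chi y * chi (ant HA z)))) => //.
    apply: (lin_comp (g := fun u => ant HB (chi x) * u) (lin_mull _)).
    exact: (lin_comp (g := fun u => u * _) (lin_mulr _) hc).
  - move=> x y; apply: (klin_comp (g := fun z => ant HB (chi x) * (chi y * chi (ant HA z)))) => //.
    apply: (lin_comp (g := fun u => ant HB (chi x) * u) (lin_mull _)).
    apply: (lin_comp (g := fun u => chi y * u) (lin_mull _)).
    exact: lin_comp hc hSA.
transitivity (\sum_(p <- cop HA a) cou HA p.1 * f (chi (ant HA p.2))).
  apply: eq_bigr => p _.
  set c := chi (ant HA p.2).
  transitivity (\sum_(r <- cop HB (chi p.1)) f (ant HB r.1 * (r.2 * c))).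
    symmetry; apply: (chi_cop (phi := fun u v => f (ant HB u * (v * c)))).
    split.
    - move=> v; apply: (klin_comp (g := fun u => ant HB u * (v * c))) => //.
      exact: (lin_comp (g := fun u => u * _) (lin_mulr _) hS).
    - move=> u; apply: (klin_comp (g := fun v => ant HB u * (v * c))) => //.
      exact: (lin_comp (g := fun v => ant HB u * v) (lin_mull _) (lin_mulr _)).
  rewrite -klin_sum //.
  have -> : \sum_(r <- cop HB (chi p.1)) ant HB r.1 * (r.2 * c)
            = (\sum_(r <- cop HB (chi p.1)) ant HB r.1 * r.2) * c.
    by rewrite mulr_suml; apply: eq_bigr => r _; rewrite mulrA.
  by rewrite antl // chi_cou -scalerAl mul1r klinZ.
apply: (@sw_counitl _ _ _ hA (fun x => f (chi (ant HA x)))).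
exact: (klin_comp (g := fun x => chi (ant HA x)) hf (lin_comp hc hSA)).
Qed.

End HopfMap.
Section Anti.
Variables (K : fieldType) (A : algType K) (H : HopfData A).
Hypothesis hH : is_hopf H.
Local Notation S := (ant H).
Local Notation e := (cou H).

Lemma antE y z : \sum_(u <- cop H y) \sum_(v <- cop H z) u.1 * (v.1 * S v.2) * S u.2
  = (e y * e z) *: 1.
Proof.
transitivity (\sum_(u <- cop H y) e z *: (u.1 * S u.2)).
  apply: eq_bigr => u _; rewrite -mulr_suml -mulr_sumr antr //.
  by rewrite -scalerAr mulr1 -scalerAl.
by rewrite -scaler_sumr antr // scalerA mulrC.
Qed.

Lemma ant_mul (f : A -> K) a b : klin f -> f (S (a * b)) = f (S b * S a).
Proof.
move=> hf; have hS := ant_lin hH.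
have kS c d : klin (fun x => f (S (c * x * d))).
  apply: (klin_comp (g := fun x => S (c * x * d))) => //.
  apply: (lin_comp (h := fun x => c * x * d) hS).
  exact: (lin_comp (g := fun u => u * d) (lin_mulr _) (lin_mull _)).
have kM c d : klin (fun x => f (c * x * d)).
  apply: (klin_comp (g := fun x => c * x * d)) => //.
  exact: (lin_comp (g := fun u => u * d) (lin_mulr _) (lin_mull _)).
transitivity (\sum_(p <- cop H a) e p.2 * f (S (p.1 * b))).
  symmetry; apply: (sw_counitr hH (g := fun x => f (S (x * b)))).
  by apply: (klin_ext (kS 1 b)) => x; rewrite mul1r.
transitivity (\sum_(p <- cop H a) \sum_(q <- cop H b) \sum_(u <- cop H p.2)
     \sum_(v <- cop H q.2) f (S (p.1 * q.1) * (u.1 * (v.1 * S v.2) * S u.2))).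
  apply: eq_bigr => p _.
  rewrite -(sw_counitr hH (g := fun y => f (S (p.1 * y)))); last first.
    by apply: (klin_ext (kS p.1 1)) => x; rewrite mulr1.
  rewrite mulr_sumr; apply: eq_bigr => q _.
  transitivity (f (S (p.1 * q.1) * \sum_(u <- cop H p.2) \sum_(v <- cop H q.2)
      (u.1 * (v.1 * S v.2) * S u.2))).
    by rewrite antE -scalerAr mulr1 klinZ // mulrA [e p.2 * _]mulrC.
  rewrite mulr_sumr klin_sum //; apply: eq_bigr => u _.
  by rewrite mulr_sumr klin_sum.
transitivity (\sum_(p <- cop H a) \sum_(u <- cop H p.2) \sum_(q <- cop H b)
     \sum_(v <- cop H q.2) f (S (p.1 * q.1) * (u.1 * (v.1 * S v.2) * S u.2))).
  by apply: eq_bigr => p _; rewrite exchange_big.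
rewrite -(@coassoc _ _ _ hH (fun x y z => \sum_(q <- cop H b) \sum_(v <- cop H q.2)
     f (S (x * q.1) * (y * (v.1 * S v.2) * S z)))) //; last first.
  split; [|split].
  - move=> y z; apply: klin_sum_fun => q; apply: klin_sum_fun => v.
    apply: (klin_comp (g := fun x => S (x * q.1) * (y * (v.1 * S v.2) * S z))) => //.
    apply: (lin_comp (g := fun u => u * _) (lin_mulr _)).
    exact: (lin_comp hS (lin_mulr _)).
  - move=> x z; apply: klin_sum_fun => q; apply: klin_sum_fun => v.
    apply: (klin_comp (g := fun y => S (x * q.1) * (y * (v.1 * S v.2) * S z))) => //.
    apply: (lin_comp (g := fun u => _ * u) (lin_mull _)).
    exact: (lin_comp (g := fun u => u * _) (lin_mulr _) (lin_mulr _)).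
  - move=> x y; apply: klin_sum_fun => q; apply: klin_sum_fun => v.
    apply: (klin_comp (g := fun z => S (x * q.1) * (y * (v.1 * S v.2) * S z))) => //.
    apply: (lin_comp (g := fun u => _ * u) (lin_mull _)).
    exact: (lin_comp (g := fun u => _ * u) (lin_mull _) hS).
transitivity (\sum_(p <- cop H a) \sum_(u <- cop H p.1) \sum_(q <- cop H b)
     \sum_(v <- cop H q.1) f (S (u.1 * v.1) * (u.2 * v.2) * (S q.2 * S p.2))).
  apply: eq_bigr => p _; apply: eq_bigr => u _.
  rewrite -(@coassoc _ _ _ hH (fun x y z =>
     f (S (u.1 * x) * (u.2 * (y * S z) * S p.2)))) //; last first.
    split; [|split].
    - move=> y z; apply: (klin_comp (g := fun x => S (u.1 * x) * (u.2 * (y * S z) * S p.2))) => //.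
      apply: (lin_comp (g := fun w => w * _) (lin_mulr _)).
      exact: (lin_comp hS (lin_mull _)).
    - move=> x z; apply: (klin_comp (g := fun y => S (u.1 * x) * (u.2 * (y * S z) * S p.2))) => //.
      apply: (lin_comp (g := fun w => _ * w) (lin_mull _)).
      apply: (lin_comp (g := fun w => w * _) (lin_mulr _)).
      exact: (lin_comp (g := fun w => _ * w) (lin_mull _) (lin_mulr _)).
    - move=> x y; apply: (klin_comp (g := fun z => S (u.1 * x) * (u.2 * (y * S z) * S p.2))) => //.
      apply: (lin_comp (g := fun w => _ * w) (lin_mull _)).
      apply: (lin_comp (g := fun w => w * _) (lin_mulr _)).
      apply: (lin_comp (g := fun w => _ * w) (lin_mull _)).
      exact: (lin_comp (g := fun w => _ * w) (lin_mull _) hS).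
  by apply: eq_bigr => q _; apply: eq_bigr => v _; rewrite !mulrA.
transitivity (\sum_(p <- cop H a) \sum_(q <- cop H b)
     e p.1 * (e q.1 * f (S q.2 * S p.2))).
  apply: eq_bigr => p _; rewrite exchange_big; apply: eq_bigr => q _.
  set c := S q.2 * S p.2.
  rewrite -(@copM _ _ _ hH (fun s t => f (S s * t * c))); last first.
    split.
    - move=> t; apply: (klin_comp (g := fun s => S s * t * c)) => //.
      apply: (lin_comp (g := fun w => w * _) (lin_mulr _)).
      exact: (lin_comp (g := fun w => w * _) (lin_mulr _) hS).
    - by move=> s; apply: kM.
  transitivity (f ((\sum_(r <- cop H (p.1 * q.1)) S r.1 * r.2) * c)).
    by rewrite mulr_suml klin_sum.
  by rewrite antl // couM // -scalerAl mul1r klinZ // mulrA.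
transitivity (\sum_(p <- cop H a) e p.1 * f (S b * S p.2)).
  apply: eq_bigr => p _; rewrite -mulr_sumr; congr (_ * _).
  apply: (sw_counitl hH (g := fun y => f (S y * S p.2))).
  apply: (klin_comp (g := fun y => S y * S p.2)) => //.
  exact: (lin_comp (g := fun w => w * _) (lin_mulr _) hS).
apply: (sw_counitl hH (g := fun y => f (S b * S y))).
apply: (klin_comp (g := fun y => S b * S y)) => //.
exact: (lin_comp (g := fun w => _ * w) (lin_mull _) hS).
Qed.

End Anti.
Section AntiCop.
Variables (K : fieldType) (A : algType K) (H : HopfData A).
Hypothesis hH : is_hopf H.
Local Notation S := (ant H).
Local Notation e := (cou H).

Lemma bil_l (phi : A -> A -> K) (g : A -> A) t : bilin phi -> lin g ->
  klin (fun s => phi (g s) t).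
Proof. by case=> h1 _ hg; apply: (klin_comp (f := fun s => phi s t)). Qed.
Lemma bil_r (phi : A -> A -> K) (g : A -> A) s : bilin phi -> lin g ->
  klin (fun t => phi s (g t)).
Proof. by case=> _ h2 hg; apply: (klin_comp (f := phi s)). Qed.

Lemma lin_id : lin (fun x : A => x). Proof. by []. Qed.

Lemma lin_ml (c : A) (g : A -> A) : lin g -> lin (fun x => c * g x).
Proof. exact: (lin_comp (g := fun u => c * u) (lin_mull _)). Qed.
Lemma lin_mr (c : A) (g : A -> A) : lin g -> lin (fun x => g x * c).
Proof. exact: (lin_comp (g := fun u => u * c) (lin_mulr _)). Qed.

Lemma sw_comp (psi : A -> A -> K) (g : A -> A) : bilin psi -> lin g ->
  klin (fun x => sw H psi (g x)).
Proof. by move=> hp hg; apply: (klin_comp (f := sw H psi)) => //; apply: sw_klin. Qed.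

Lemma FR (Phi : A -> A -> K) y : bilin Phi ->
  \sum_(w <- cop H y) \sum_(u <- cop H w.1) \sum_(v <- cop H w.2)
     Phi (u.1 * S v.2) (u.2 * S v.1) = e y * Phi 1 1.
Proof.
move=> hP; have hS := ant_lin hH.
rewrite (@coassoc _ _ _ hH (fun x y' z => \sum_(v <- cop H z) Phi (x * S v.2) (y' * S v.1))); last first.
  split; [|split].
  - move=> y' z; apply: klin_sum_fun => v; exact: (bil_l _ hP (lin_mulr _)).
  - move=> x z; apply: klin_sum_fun => v; exact: (bil_r _ hP (lin_mulr _)).
  - move=> x y'; apply: (sw_comp (psi := fun s t => Phi (x * S t) (y' * S s))) lin_id.
    split=> [t|s]; [exact: (bil_r _ hP (lin_ml _ hS)) | exact: (bil_l _ hP (lin_ml _ hS))].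
transitivity (\sum_(w <- cop H y) Phi (w.1 * S w.2) 1).
  apply: eq_bigr => w _.
  rewrite -(@coassoc _ _ _ hH (fun x y' z => Phi (w.1 * S z) (x * S y'))); last first.
    split; [|split].
    - by move=> y' z; exact: (bil_r _ hP (lin_mulr _)).
    - by move=> x z; exact: (bil_r _ hP (lin_ml _ hS)).
    - by move=> x y'; exact: (bil_l _ hP (lin_ml _ hS)).
  transitivity (\sum_(q <- cop H w.2) e q.1 * Phi (w.1 * S q.2) 1).
    apply: eq_bigr => q _.
    case: hP => _ h2.
    by rewrite -(klin_sum (f := Phi (w.1 * S q.2))) // antr // (klinZ (f := Phi (w.1 * S q.2))).
  apply: (sw_counitl hH (g := fun z => Phi (w.1 * S z) 1)).
  exact: (bil_l _ hP (lin_ml _ hS)).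
case: hP => h1 _.
by rewrite -(klin_sum (f := fun s => Phi s 1)) // antr // (klinZ (f := fun s => Phi s 1)).
Qed.
Lemma LF (Psi : A -> A -> K) x : bilin Psi ->
  \sum_(w <- cop H x) \sum_(r <- cop H (S w.1)) \sum_(u <- cop H w.2)
     Psi (r.1 * u.1) (r.2 * u.2) = e x * Psi 1 1.
Proof.
move=> hP; have hS := ant_lin hH.
transitivity (\sum_(w <- cop H x) sw H Psi (S w.1 * w.2)).
  by apply: eq_bigr => w _; rewrite /sw (copM hH hP).
rewrite -(klin_sum (f := sw H Psi)) ?antl //; last exact: sw_klin.
rewrite (klinZ (f := sw H Psi)); last exact: sw_klin.
by rewrite /sw (cop1 hH hP).
Qed.

Lemma ant_cop (phi : A -> A -> K) a : bilin phi ->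
  \sum_(r <- cop H (S a)) phi r.1 r.2 = \sum_(p <- cop H a) phi (S p.2) (S p.1).
Proof.
move=> hp; have hS := ant_lin hH.
have hsw : klin (fun x => sw H phi (S x)) by apply: sw_comp.
have bilP (m n : A) : bilin (fun s t => phi (s * m) (t * n)).
  by split=> [t|s]; [exact: (bil_l _ hp (lin_mulr _)) | exact: (bil_r _ hp (lin_mulr _))].
have bilX (z : A) : bilin (fun s t => \sum_(r <- cop H (S z)) phi (r.1 * s) (r.2 * t)).
  split=> [t|s]; apply: klin_sum_fun => r.
    exact: (bil_l _ hp (lin_mull _)).
  exact: (bil_r _ hp (lin_mull _)).
transitivity (\sum_(p <- cop H a) e p.2 * sw H phi (S p.1)).
  by symmetry; apply: (sw_counitr hH (g := fun x => sw H phi (S x))).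
transitivity (\sum_(p <- cop H a) \sum_(w <- cop H p.2) \sum_(u <- cop H w.1)
   \sum_(v <- cop H w.2) \sum_(r <- cop H (S p.1))
     phi (r.1 * (u.1 * S v.2)) (r.2 * (u.2 * S v.1))).
  apply: eq_bigr => p _.
  rewrite (FR (Phi := fun s t => \sum_(r <- cop H (S p.1)) phi (r.1 * s) (r.2 * t))) //.
  by rewrite /sw; congr (_ * _); apply: eq_bigr => r _; rewrite !mulr1.
rewrite -(@coassoc _ _ _ hH (fun x y z => \sum_(u <- cop H y) \sum_(v <- cop H z)
   \sum_(r <- cop H (S x)) phi (r.1 * (u.1 * S v.2)) (r.2 * (u.2 * S v.1)))); last first.
  split; [|split].
  - move=> y z; apply: klin_sum_fun => u; apply: klin_sum_fun => v.
    apply: (sw_comp (psi := fun s t => phi (s * (u.1 * S v.2)) (t * (u.2 * S v.1)))) => //.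
  - move=> x z.
    apply: (sw_comp (psi := fun s t => \sum_(v <- cop H z) \sum_(r <- cop H (S x))
       phi (r.1 * (s * S v.2)) (r.2 * (t * S v.1)))) lin_id.
    split=> [t|s]; apply: klin_sum_fun => v; apply: klin_sum_fun => r.
      exact: (bil_l _ hp (lin_ml _ (lin_mulr _))).
    exact: (bil_r _ hp (lin_ml _ (lin_mulr _))).
  - move=> x y; apply: klin_sum_fun => u.
    apply: (sw_comp (psi := fun s t => \sum_(r <- cop H (S x))
       phi (r.1 * (u.1 * S t)) (r.2 * (u.2 * S s)))) lin_id.
    split=> [t|s]; apply: klin_sum_fun => r.
      exact: (bil_r _ hp (lin_ml _ (lin_ml _ hS))).
    exact: (bil_l _ hp (lin_ml _ (lin_ml _ hS))).
transitivity (\sum_(p <- cop H a) e p.1 * \sum_(v <- cop H p.2) phi (S v.2) (S v.1)).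
  apply: eq_bigr => p _.
  transitivity (e p.1 * (fun s t => \sum_(v <- cop H p.2) phi (s * S v.2) (t * S v.1)) 1 1);
    last by congr (_ * _); apply: eq_bigr => v _; rewrite !mul1r.
  rewrite -(LF (Psi := fun s t => \sum_(v <- cop H p.2) phi (s * S v.2) (t * S v.1))); last first.
    split=> [t|s]; apply: klin_sum_fun => v.
      exact: (bil_l _ hp (lin_mulr _)).
    exact: (bil_r _ hp (lin_mulr _)).
  apply: eq_bigr => w _.
  under eq_bigr => u _ do rewrite exchange_big.
  rewrite exchange_big; apply: eq_bigr => r _; apply: eq_bigr => u _.
  by apply: eq_bigr => v _; rewrite !mulrA.
apply: (sw_counitl hH (g := fun x => \sum_(v <- cop H x) phi (S v.2) (S v.1))).
apply: (sw_klin hH (phi := fun s t => phi (S t) (S s))).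
by split=> [t|s]; [exact: (bil_r _ hp hS) | exact: (bil_l _ hp hS)].
Qed.

End AntiCop.
Section AllP.
Variable T : Type.
Fixpoint allP (P : T -> Prop) (s : seq T) : Prop :=
  match s with [::] => True | x :: s => P x /\ allP P s end.

Lemma allP_all (P : T -> Prop) s : (forall x, P x) -> allP P s.
Proof. by move=> h; elim: s => //= x s ->; split. Qed.
Lemma allP_cat (P : T -> Prop) s t : allP P s -> allP P t -> allP P (s ++ t).
Proof. by elim: s => //= x s IH [h1 h2] ht; split; last exact: IH. Qed.
Lemma allP_nth (P : T -> Prop) s d i : allP P s -> (i < size s)%N -> P (nth d s i).
Proof. by elim: s i => //= x s IH [|i] [h1 h2] //= hi; apply: IH. Qed.
Lemma allP_impl (P Q : T -> Prop) s : (forall x, P x -> Q x) -> allP P s -> allP Q s.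
Proof. by move=> h; elim: s => //= x s IH [h1 h2]; split; [apply: h | apply: IH]. Qed.
End AllP.

Lemma allP_map (T U : Type) (F : T -> U) (P : U -> Prop) s :
  allP (fun x => P (F x)) s -> allP P (map F s).
Proof. by elim: s => //= x s IH [h1 h2]; split; last exact: IH. Qed.
Lemma allP_flatten (T : Type) (P : T -> Prop) ss :
  allP (allP P) ss -> allP P (flatten ss).
Proof. by elim: ss => //= s ss IH [h1 h2]; apply: allP_cat => //; apply: IH. Qed.

Lemma cop_inI (K : fieldType) (A : algType K) (X : (A -> K) -> Prop) f s :
  allP (fun p => X p.1 /\ X p.2) s ->
  (forall a b, f (a * b) = \sum_(p <- s) p.1 a * p.2 b) -> cop_in X f.
Proof. by move=> h e; exists s; split=> // i hi; apply: (allP_nth _ h). Qed.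

Section Gen.
Variables (K : fieldType) (A : algType K) (H : HopfData A) (br : A -> A -> K).
Hypotheses (hH : is_hopf H) (hbr : is_braiding H br).
Local Notation S := (ant H).

Lemma br_bilin : bilin br. Proof. by case: hbr. Qed.
Lemma br_mulr a b c : br a (b * c) = \sum_(p <- cop H a) br p.1 b * br p.2 c.
Proof. by case: hbr => _ [_ [_ [h _]]]. Qed.
Lemma br_mull a b c : br (a * b) c = \sum_(p <- cop H c) br b p.1 * br a p.2.
Proof. by case: hbr => _ [_ [_ [_ h]]]. Qed.

Inductive Gen : (A -> K) -> Prop :=
| Gp a : Gen (lplus br a)
| Gm a : Gen (lminus H br a)
| Gc : Gen (cou H)
| Gl k f g : Gen f -> Gen g -> Gen (fun a => k * f a + g a)
| Gv f g : Gen f -> Gen g -> Gen (conv H f g)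
| Gs f : Gen f -> Gen (fun a => f (S a)).

Lemma Gen_ext f g : Gen f -> (forall x, f x = g x) -> Gen g.
Proof. by move=> h e; have <- : f = g by apply: functional_extensionality. Qed.

Lemma Gen0 : Gen (fun _ => 0).
Proof. by apply: (Gen_ext (Gl (-1) Gc Gc)) => x; rewrite mulN1r addNr. Qed.

Lemma GenZ k f : Gen f -> Gen (fun a => k * f a).
Proof. by move=> h; apply: (Gen_ext (Gl k h Gen0)) => x; rewrite addr0. Qed.

Lemma Gen_Ualg f : Gen f -> Ualg H br f.
Proof.
move=> g X [_ [hc [hl [hv [hs _]]]]] hp hm.
by elim: g => *; auto.
Qed.

Lemma Gen_klin f : Gen f -> klin f.
Proof.
elim=> [a|a||k f' g' _ h1 _ h2|f' g' _ h1 _ h2|f' _ h1].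
- by case: br_bilin => _ h; apply: h.
- by case: br_bilin => h _; apply: h.
- exact: cou_klin.
- exact: klin_add (klin_mull _ h1) h2.
- apply: (sw_klin hH (phi := fun x y => f' x * g' y)).
  by split=> [y|x]; [apply: klin_mulr | apply: klin_mull].
- exact: (klin_comp (g := S)) (ant_lin hH).
Qed.
Lemma allP_of_nth (T : Type) (P : T -> Prop) s d :
  (forall i, (i < size s)%N -> P (nth d s i)) -> allP P s.
Proof.
elim: s => //= x s IH h; split; first exact: (h 0%N).
by apply: IH => i hi; apply: (h i.+1).
Qed.

Lemma cop_inE (X : (A -> K) -> Prop) f : cop_in X f ->
  exists s, allP (fun p => X p.1 /\ X p.2) s /\
    (forall a b, f (a * b) = \sum_(p <- s) p.1 a * p.2 b).
Proof.
case=> s [h e]; exists s; split => //.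
exact: (allP_of_nth (d := (fun _ => 0, fun _ => 0))).
Qed.

Lemma Gen_cop f : Gen f -> cop_in Gen f.
Proof.
elim=> [a|a||k f' g' _ hF _ hG|f' g' gf hF gg hG|f' gf hF].
- apply: (cop_inI (s := map (fun p => (lplus br p.1, lplus br p.2)) (cop H a))).
    by apply: allP_map; apply: allP_all => p; split; apply: Gp.
  by move=> x y; rewrite big_map /lplus br_mulr.
- apply: (cop_inI (s := map (fun p => (lminus H br p.1, lminus H br p.2)) (cop H a))).
    by apply: allP_map; apply: allP_all => p; split; apply: Gm.
  move=> x y; rewrite big_map /lminus br_mull.
  rewrite (ant_cop hH (phi := fun s t => br y s * br x t)); last first.
    case: br_bilin => h1 h2.
    by split=> [t|s]; [apply: klin_mulr | apply: klin_mull].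
  by apply: eq_bigr => p _; rewrite mulrC.
- apply: (cop_inI (s := [:: (cou H, cou H)])) => /=; first by split; [split; apply: Gc|].
  by move=> x y; rewrite big_seq1 couM.
- case: (cop_inE hF) => sf [hf ef]; case: (cop_inE hG) => sg [hg eg].
  apply: (cop_inI (s := map (fun p => (fun a => k * p.1 a, p.2)) sf ++ sg)).
    apply: allP_cat => //; apply: allP_map.
    by apply: allP_impl hf => p [h1 h2]; split=> //; apply: GenZ.
  move=> x y; rewrite big_cat big_map /= ef eg mulr_sumr; congr (_ + _).
  by apply: eq_bigr => p _; rewrite mulrA.
- case: (cop_inE hF) => sf [hf ef]; case: (cop_inE hG) => sg [hg eg].
  apply: (cop_inI (s := flatten (map (fun r => map (fun t =>
      (conv H r.1 t.1, conv H r.2 t.2)) sg) sf))).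
    apply: allP_flatten; apply: allP_map; apply: allP_impl hf => r [h1 h2].
    by apply: allP_map; apply: allP_impl hg => t [h3 h4]; split; apply: Gv.
  move=> x y; rewrite big_flatten big_map.
  under eq_bigr => r _ do rewrite big_map.
  rewrite /conv (copM hH (phi := fun u v => f' u * g' v)); last first.
    have k1 := Gen_klin gf; have k2 := Gen_klin gg.
    by split=> [v|u]; [apply: klin_mulr | apply: klin_mull].
  transitivity (\sum_(p <- cop H x) \sum_(q <- cop H y) \sum_(r <- sf) \sum_(t <- sg)
     (r.1 p.1 * t.1 p.2) * (r.2 q.1 * t.2 q.2)).
    apply: eq_bigr => p _; apply: eq_bigr => q _.
    rewrite ef eg mulr_suml; apply: eq_bigr => r _.
    by rewrite mulr_sumr; apply: eq_bigr => t _; rewrite mulrACA.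
  symmetry.
  transitivity (\sum_(r <- sf) \sum_(t <- sg) \sum_(p <- cop H x) \sum_(q <- cop H y)
     (r.1 p.1 * t.1 p.2) * (r.2 q.1 * t.2 q.2)).
    apply: eq_bigr => r _; apply: eq_bigr => t _.
    rewrite mulr_suml; apply: eq_bigr => p _.
    by rewrite mulr_sumr.
  under eq_bigr => r _ do rewrite exchange_big.
  under eq_bigr => r _ do under eq_bigr => p _ do rewrite exchange_big.
  rewrite exchange_big; apply: eq_bigr => p _.
  by rewrite exchange_big.
- case: (cop_inE hF) => sf [hf ef].
  apply: (cop_inI (s := map (fun p => (fun a => p.2 (S a), fun a => p.1 (S a))) sf)).
    apply: allP_map; apply: allP_impl hf => p [h1 h2]; split; exact: Gs.
  move=> x y; rewrite big_map /= (ant_mul hH _ _ (Gen_klin gf)) ef.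
  by apply: eq_bigr => p _; rewrite mulrC.
Qed.

Lemma Gen_hopf : hopf_subalg H Gen.
Proof.
split; first exact: Gen_klin.
split; first exact: Gc.
split; first by move=> k f g; apply: Gl.
split; first by move=> f g; apply: Gv.
split; first by move=> f; apply: Gs.
exact: Gen_cop.
Qed.

Lemma Ualg_Gen f : Ualg H br f -> Gen f.
Proof. by move=> h; apply: h; [exact: Gen_hopf | exact: Gp | exact: Gm]. Qed.

End Gen.
Unset Implicit Arguments.

Theorem proposition3 (K : fieldType) (A B : algType K)
  (HA : HopfData A) (HB : HopfData B)
  (brA : A -> A -> K) (brB : B -> B -> K) (chi : A -> B) :
  is_hopf HA -> is_hopf HB ->
  is_braiding HA brA -> is_braiding HB brB ->
  hopf_map HA HB chi ->
  (forall b : B, exists a : A, chi a = b) ->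
  (forall a a' : A, brA a a' = brB (chi a) (chi a')) ->
  (* chi* : u |-> u o chi maps U(B) into U(A) ... *)
  (forall u, Ualg HB brB u -> Ualg HA brA (fun a => u (chi a))) /\
  (* ... injectively ... *)
  (forall u v, Ualg HB brB u -> Ualg HB brB v ->
     (forall a, u (chi a) = v (chi a)) -> forall b, u b = v b) /\
  (* ... and onto U(A) *)
  (forall f, Ualg HA brA f ->
     exists u, Ualg HB brB u /\ forall a, u (chi a) = f a) /\
  (* chi* (linear by construction) is a Hopf algebra map U(B) -> U(A): *)
  (* multiplicative (convolution) and unital, *)
  (forall u v, Ualg HB brB u -> Ualg HB brB v -> forall a,
     conv HB u v (chi a) = conv HA (fun x => u (chi x)) (fun x => v (chi x)) a) /\
  (forall a, cou HB (chi a) = cou HA a) /\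
  (* preserves the counit f |-> f(1), *)
  (forall u, Ualg HB brB u -> u (chi 1) = u 1) /\
  (* preserves the coproduct: (chi* (x) chi* )(Delta u) = Delta (chi* u), *)
  (forall u, Ualg HB brB u -> forall s : seq ((B -> K) * (B -> K)),
     (forall b b', u (b * b') = \sum_(p <- s) p.1 b * p.2 b') ->
     forall a a', u (chi (a * a')) = \sum_(p <- s) p.1 (chi a) * p.2 (chi a')) /\
  (* and commutes with the antipodes u |-> u o S. *)
  (forall u, Ualg HB brB u -> forall a, u (ant HB (chi a)) = u (chi (ant HA a))).
Proof.
move=> hA hB hbA hbB hchi surj hbr.
have klB u : Ualg HB brB u -> klin u.
  by move=> h; apply: (Gen_klin hB hbB); apply: Ualg_Gen.
have convE (u v : B -> K) a : klin u -> klin v ->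
    conv HB u v (chi a) = conv HA (fun x => u (chi x)) (fun x => v (chi x)) a.
  move=> ku kv; rewrite /conv (chi_cop hchi (phi := fun x y => u x * v y)) //.
  by split=> [y|x]; [apply: klin_mulr | apply: klin_mull].
have lmE a x : lminus HB brB (chi a) (chi x) = lminus HA brA a x.
  rewrite /lminus hbr; apply: (ant_chi hA hB hchi).
  by case: (br_bilin hbB) => _ h; apply: h.
have P1 u : Gen HB brB u -> Gen HA brA (fun a => u (chi a)).
  elim=> [b|b||k f g _ h1 _ h2|f g gf h1 gg h2|f gf h1].
  - case: (surj b) => a <-.
    by apply: (Gen_ext (Gp _ _ a)) => x; rewrite /lplus hbr.
  - case: (surj b) => a <-.
    by apply: (Gen_ext (Gm _ _ a)) => x; rewrite lmE.
  - by apply: (Gen_ext (Gc _ _)) => x; rewrite (chi_cou hchi).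
  - exact: Gl.
  - apply: (Gen_ext (Gv h1 h2)) => x; rewrite convE //; exact: (Gen_klin hB hbB).
  - apply: (Gen_ext (Gs h1)) => x; rewrite (ant_chi hA hB hchi) //.
    exact: (Gen_klin hB hbB).
split.
  by move=> u h; apply: Gen_Ualg; apply: P1; apply: Ualg_Gen.
split.
  by move=> u v _ _ e b; case: (surj b) => a <-.
split.
  move=> f /(Ualg_Gen hA hbA); elim=> [a|a||k f' g' _ [u1 [h1 e1]] _ [u2 [h2 e2]]|
     f' g' _ [u1 [h1 e1]] _ [u2 [h2 e2]]|f' _ [u1 [h1 e1]]].
  - exists (lplus brB (chi a)); split; first exact: Gen_Ualg (Gp _ _ _).
    by move=> x; rewrite /lplus hbr.
  - exists (lminus HB brB (chi a)); split; first exact: Gen_Ualg (Gm _ _ _).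
    exact: lmE.
  - exists (cou HB); split; first exact: Gen_Ualg (Gc _ _).
    exact: (chi_cou hchi).
  - exists (fun b => k * u1 b + u2 b); split.
      by apply: Gen_Ualg; apply: Gl; apply: Ualg_Gen.
    by move=> x; rewrite e1 e2.
  - exists (conv HB u1 u2); split.
      by apply: Gen_Ualg; apply: Gv; apply: Ualg_Gen.
    move=> x; rewrite convE; try exact: klB.
    by rewrite /conv; apply: eq_bigr => p _; rewrite e1 e2.
  - exists (fun b => u1 (ant HB b)); split.
      by apply: Gen_Ualg; apply: Gs; apply: Ualg_Gen.
    by move=> x; rewrite (ant_chi hA hB hchi) ?e1 //; exact: klB.
split.
  by move=> u v hu hv a; apply: convE; apply: klB.
split; first exact: (chi_cou hchi).
split; first by move=> u _; rewrite (chi1 hchi).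
split; first by move=> u _ s e a a'; rewrite (chiM hchi) e.
by move=> u hu a; apply: (ant_chi hA hB hchi); apply: klB.
Qed.
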